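(* For every integer $n\ge 2$, $C^0_{L_n}=1+2\cos\big(\frac{\pi}{n+1}\big)$.
   Context: $L_n$ is the path graph with vertices $\{1,\dots,n\}$ and edges $\{j,j+1\}$, $1\le j\le n-1$, with the graph distance. A measure $\mu$ on $L_n$ is a weight function $\mu:\{1,\dots,n\}\to(0,\infty)$, $\mu(A)=\sum_{v\in A}\mu(v)$. Closed balls: $B(x,r)=\{y:|x-y|\le r\}$. $C^0_\mu=\max_{1\le x\le n}\mu(B(x,1))/\mu(x)$ and $C^0_{L_n}=\inf_\mu C^0_\mu$ over all such measures. *)

(* Defs.v *)
From Stdlib Require Import Reals Lra Lia List Arith.
Import ListNotations.
Open Scope R_scope.

Definition vertices (n : nat) : list nat := seq 1 n.

Definition path_dist (x y : nat) : nat := ((x - y) + (y - x))%nat.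

Definition ball (n x r : nat) : list nat :=
  filter (fun y => Nat.leb (path_dist x y) r) (vertices n).

(* mu(A) = sum_{v in A} mu(v), A given as a duplicate-free list. *)
Definition measure_of (mu : nat -> R) (A : list nat) : R :=
  fold_right Rplus 0 (map mu A).

(* A measure on L_n: positive weights on the vertices 1..n
   (values of mu outside 1..n are irrelevant). *)
Definition is_measure (n : nat) (mu : nat -> R) : Prop :=
  forall v : nat, (1 <= v <= n)%nat -> 0 < mu v.

(* C^0_mu = max_{1<=x<=n} mu(B(x,1)) / mu(x).  All ratios are >= 1 > 0,
   so folding Rmax from 0 gives the maximum for n >= 1. *)
Definition C0_mu (n : nat) (mu : nat -> R) : R :=
  fold_right Rmax 0 (map (fun x => measure_of mu (ball n x 1) / mu x) (vertices n)).

Definition is_infimum (E : R -> Prop) (m : R) : Prop :=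
  (forall c, E c -> m <= c) /\ (forall b, (forall c, E c -> b <= c) -> b <= m).

(* The set { C^0_mu : mu a measure on L_n }; C^0_{L_n} is its infimum. *)
Definition C0_values (n : nat) : R -> Prop :=
  fun c => exists mu : nat -> R, is_measure n mu /\ c = C0_mu n mu.

(* Main.v *)
Require Import Defs.
From Stdlib Require Import Reals.
From Stdlib Require Import Lra Lia List Arith.
Import ListNotations.
Open Scope R_scope.

Definition sumL (l : list nat) (g : nat -> R) : R := fold_right Rplus 0 (map g l).

Lemma sumL_app l1 l2 g : sumL (l1 ++ l2) g = sumL l1 g + sumL l2 g.
Proof. induction l1; unfold sumL in *; simpl; [lra|]. rewrite IHl1; lra. Qed.

Lemma sumL_plus l f g : sumL l (fun x => f x + g x) = sumL l f + sumL l g.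
Proof. induction l; unfold sumL in *; simpl; [lra|]. rewrite IHl; lra. Qed.

Lemma sumL_scal l a f : sumL l (fun x => a * f x) = a * sumL l f.
Proof. induction l; unfold sumL in *; simpl; [lra|]. rewrite IHl; lra. Qed.

Lemma sumL_ext l f g : (forall x, In x l -> f x = g x) -> sumL l f = sumL l g.
Proof.
  induction l; intros H; unfold sumL in *; simpl; [lra|].
  rewrite H by (left; auto). rewrite IHl; [lra|]. intros; apply H; right; auto.
Qed.

Lemma sumL_le l f g : (forall x, In x l -> f x <= g x) -> sumL l f <= sumL l g.
Proof.
  induction l; intros H; unfold sumL in *; simpl; [lra|].
  assert (f a <= g a) by (apply H; left; auto).
  assert (fold_right Rplus 0 (map f l) <= fold_right Rplus 0 (map g l))
    by (apply IHl; intros; apply H; right; auto). lra.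
Qed.

Lemma sumL_pos l f : l <> [] -> (forall x, In x l -> 0 < f x) -> 0 < sumL l f.
Proof.
  induction l; intros Hn H; [congruence|]. unfold sumL in *; simpl.
  assert (0 < f a) by (apply H; left; auto).
  destruct l.
  - simpl; lra.
  - assert (0 < fold_right Rplus 0 (map f (n :: l))).
    { apply IHl; [congruence|]. intros; apply H; right; auto. }
    lra.
Qed.

Lemma sumL_exch l1 l2 F :
  sumL l1 (fun x => sumL l2 (fun y => F x y)) = sumL l2 (fun y => sumL l1 (fun x => F x y)).
Proof.
  induction l1.
  - unfold sumL; simpl. induction l2; simpl; [lra|]. rewrite <- IHl2; lra.
  - change (sumL (a :: l1) (fun x => sumL l2 (fun y => F x y)))
      with (sumL l2 (fun y => F a y) + sumL l1 (fun x => sumL l2 (fun y => F x y))).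
    rewrite IHl1, <- sumL_plus. apply sumL_ext; intros; reflexivity.
Qed.

Lemma measure_filter mu P l :
  measure_of mu (filter P l) = sumL l (fun y => if P y then mu y else 0).
Proof.
  induction l; unfold measure_of, sumL in *; simpl; [lra|].
  destruct (P a); simpl; rewrite IHl; lra.
Qed.

Lemma path_dist_sym x y : path_dist x y = path_dist y x.
Proof. unfold path_dist; lia. Qed.

Definition ind3 (y k : nat) (f : nat -> R) : R :=
  (if Nat.ltb (y-1)%nat k then f (y-1)%nat else 0) + (if Nat.ltb y k then f y else 0)
  + (if Nat.ltb (y+1)%nat k then f (y+1)%nat else 0).

Lemma T_lemma y f k : (1 <= y)%nat ->
  sumL (seq 0 k) (fun x => if Nat.leb (path_dist y x) 1 then f x else 0) = ind3 y k f.
Proof.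
  intros Hy. induction k.
  - unfold sumL, ind3; simpl.
    destruct (Nat.ltb_spec (y-1)%nat 0); destruct (Nat.ltb_spec y 0);
      destruct (Nat.ltb_spec (y+1)%nat 0); try lia; lra.
  - rewrite seq_S, sumL_app, IHk. unfold sumL, ind3; simpl. unfold path_dist.
    destruct (Nat.leb_spec (y - k + (k - y))%nat 1);
    destruct (Nat.ltb_spec (y-1)%nat k); destruct (Nat.ltb_spec y k);
      destruct (Nat.ltb_spec (y+1)%nat k);
    destruct (Nat.ltb_spec (y-1)%nat (S k)); destruct (Nat.ltb_spec y (S k));
      destruct (Nat.ltb_spec (y+1)%nat (S k)); try lia;
    try (replace k with (y-1)%nat by lia; lra);
    try (replace k with y by lia; lra);
    try (replace k with (y+1)%nat by lia; lra); try lra.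
    all: idtac.
Qed.

Lemma inner n y f : (1 <= y <= n)%nat -> f 0%nat = 0 -> f (S n) = 0 ->
  sumL (seq 1 n) (fun x => if Nat.leb (path_dist y x) 1 then f x else 0)
  = f (y-1)%nat + f y + f (y+1)%nat.
Proof.
  intros Hy H0 Hn.
  pose proof (T_lemma y f (S (S n)) ltac:(lia)) as T.
  replace (seq 0 (S (S n))) with (0%nat :: (seq 1 n ++ [S n])) in T.
  2:{ simpl. rewrite <- seq_S. reflexivity. }
  unfold sumL in T; simpl in T. rewrite map_app, fold_right_app in T. simpl in T.
  unfold ind3 in T.
  destruct (Nat.ltb_spec (y-1)%nat (S (S n))); destruct (Nat.ltb_spec y (S (S n)));
    destruct (Nat.ltb_spec (y+1)%nat (S (S n))); try lia.
  unfold sumL.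
  destruct (Nat.leb (path_dist y 0) 1); destruct (Nat.leb (path_dist y (S n)) 1);
  rewrite ?H0, ?Hn in T;
  match type of T with
  | _ + fold_right Rplus ?z ?m = _ =>
      assert (E: forall r, fold_right Rplus r m = fold_right Rplus 0 m + r)
  end;
  try (intros r; clear; induction (seq 1 n) as [|a l IH]; simpl; [lra| rewrite IH; lra]);
  rewrite E in T; lra.
Qed.

Lemma fold_Rmax_ge l x : In x l -> x <= fold_right Rmax 0 l.
Proof.
  induction l; simpl; [tauto|]. intros [<-|H].
  - apply Rmax_l.
  - eapply Rle_trans; [apply IHl; auto| apply Rmax_r].
Qed.

Lemma fold_Rmax_const l c : 0 <= c -> l <> [] -> (forall x, In x l -> x = c) ->
  fold_right Rmax 0 l = c.
Proof.
  intros Hc. induction l; intros Hn H; [congruence|]. simpl.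
  rewrite (H a) by (left; auto).
  destruct l.
  - simpl. apply Rmax_left; auto.
  - rewrite IHl; [apply Rmax_left; lra|congruence|]. intros; apply H; right; auto.
Qed.

Section Main.
Variable n : nat.
Hypothesis hn : (2 <= n)%nat.
Let th := PI / (INR n + 1).
Let s (k : nat) := sin (INR k * th).
Let c := 1 + 2 * cos th.

Lemma INRn_pos : 0 < INR n + 1.
Proof. pose proof (pos_INR n); lra. Qed.

Lemma th_bounds : 0 < th <= PI / 3.
Proof.
  unfold th. pose proof PI_RGT_0. assert (H2: 2 <= INR n) by (replace 2 with (INR 2) by (simpl; lra); apply le_INR; lia).
  split.
  - apply Rdiv_lt_0_compat; lra.
  - unfold Rdiv. apply Rmult_le_compat_l; [lra|]. apply Rinv_le_contravar; lra.
Qed.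

Lemma cos_th_pos : 0 < cos th.
Proof. pose proof th_bounds; pose proof PI_RGT_0. apply cos_gt_0; lra. Qed.

Lemma s0 : s 0 = 0.
Proof. unfold s; simpl. rewrite Rmult_0_l; apply sin_0. Qed.

Lemma sSn : s (S n) = 0.
Proof.
  unfold s, th. rewrite S_INR. pose proof INRn_pos.
  replace ((INR n + 1) * (PI / (INR n + 1))) with PI by (field; lra). apply sin_PI.
Qed.

Lemma s_pos x : (1 <= x <= n)%nat -> 0 < s x.
Proof.
  intros Hx. unfold s, th. pose proof INRn_pos. pose proof PI_RGT_0.
  assert (1 <= INR x) by (replace 1 with (INR 1) by (simpl; lra); apply le_INR; lia).
  assert (INR x <= INR n) by (apply le_INR; lia).
  apply sin_gt_0.
  - apply Rmult_lt_0_compat; [lra| apply Rdiv_lt_0_compat; lra].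
  - replace (INR x * (PI / (INR n + 1))) with (PI * (INR x / (INR n + 1))) by (field; lra).
    rewrite <- (Rmult_1_r PI) at 2. apply Rmult_lt_compat_l; [lra|].
    apply (Rmult_lt_reg_r (INR n + 1)); [lra|].
    unfold Rdiv; rewrite Rmult_assoc, Rinv_l; lra.
Qed.

Lemma s_rec y : (1 <= y)%nat -> s (y-1)%nat + s y + s (y+1)%nat = c * s y.
Proof.
  intros Hy. unfold s, c. rewrite minus_INR by lia. rewrite plus_INR. simpl INR.
  replace ((INR y - 1) * th) with (INR y * th - th) by ring.
  replace ((INR y + 1) * th) with (INR y * th + th) by ring.
  rewrite sin_minus, sin_plus. ring.
Qed.

Lemma ball_meas mu x : (1 <= x <= n)%nat -> mu 0%nat = 0 -> mu (S n) = 0 ->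
  measure_of mu (ball n x 1) = mu (x-1)%nat + mu x + mu (x+1)%nat.
Proof.
  intros. unfold ball, vertices. rewrite measure_filter. apply inner; auto.
Qed.

Lemma seq_ne : seq 1 n <> [].
Proof. destruct n; [lia|]. simpl; congruence. Qed.

Lemma c_in : C0_values n c.
Proof.
  exists s. split.
  - intros v Hv; apply s_pos; auto.
  - unfold C0_mu. symmetry. apply fold_Rmax_const.
    + pose proof cos_th_pos; unfold c; lra.
    + unfold vertices. destruct n; [lia|]. simpl; congruence.
    + intros r Hr. apply in_map_iff in Hr. destruct Hr as [x [<- Hx]].
      unfold vertices in Hx. apply in_seq in Hx.
      rewrite ball_meas by first [lia|apply s0|apply sSn].
      rewrite s_rec by lia. pose proof (s_pos x ltac:(lia)). field; lra.
Qed.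

Lemma c_low mu : is_measure n mu -> c <= C0_mu n mu.
Proof.
  intros Hmu. set (M := C0_mu n mu). set (V := seq 1 n).
  assert (HB: forall x, In x V -> measure_of mu (ball n x 1) <= M * mu x).
  { intros x Hx. unfold V in Hx. apply in_seq in Hx.
    assert (0 < mu x) by (apply Hmu; lia).
    assert (measure_of mu (ball n x 1) / mu x <= M).
    { apply fold_Rmax_ge. apply in_map_iff. exists x; split; auto.
      unfold vertices; apply in_seq; lia. }
    apply (Rmult_le_compat_r (mu x)) in H0; [|lra].
    unfold Rdiv in H0. rewrite Rmult_assoc, Rinv_l in H0; lra. }
  assert (HS: 0 < sumL V (fun y => s y * mu y)).
  { apply sumL_pos; [apply seq_ne|]. intros x Hx; unfold V in Hx; apply in_seq in Hx.
    apply Rmult_lt_0_compat; [apply s_pos; lia| apply Hmu; lia]. }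
  assert (E1: c * sumL V (fun y => s y * mu y)
    = sumL V (fun y => sumL V (fun x => if Nat.leb (path_dist y x) 1 then s x * mu y else 0))).
  { rewrite <- sumL_scal. apply sumL_ext. intros y Hy; unfold V in Hy; apply in_seq in Hy.
    transitivity (mu y * sumL V (fun x => if Nat.leb (path_dist y x) 1 then s x else 0)).
    - unfold V. rewrite inner by first [lia|apply s0|apply sSn]. rewrite s_rec by lia. ring.
    - rewrite <- sumL_scal. apply sumL_ext. intros x _.
      destruct (Nat.leb (path_dist y x) 1); ring. }
  assert (E2: sumL V (fun y => sumL V (fun x => if Nat.leb (path_dist y x) 1 then s x * mu y else 0))
    = sumL V (fun x => s x * measure_of mu (ball n x 1))).
  { rewrite sumL_exch. apply sumL_ext. intros x _.
    unfold ball, vertices. rewrite measure_filter. fold V. rewrite <- sumL_scal.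
    apply sumL_ext. intros y _. rewrite path_dist_sym.
    destruct (Nat.leb (path_dist x y) 1); ring. }
  assert (E3: sumL V (fun x => s x * measure_of mu (ball n x 1)) <= M * sumL V (fun y => s y * mu y)).
  { rewrite <- sumL_scal. apply sumL_le. intros x Hx.
    pose proof (HB x Hx). unfold V in Hx; apply in_seq in Hx.
    pose proof (s_pos x ltac:(lia)).
    replace (M * (s x * mu x)) with (s x * (M * mu x)) by ring.
    apply Rmult_le_compat_l; lra. }
  apply (Rmult_le_reg_r _ _ _ HS). lra.
Qed.

End Main.

Theorem theorem3p7 (n : nat) (hn : (2 <= n)%nat) :
  is_infimum (C0_values n) (1 + 2 * cos (PI / (INR n + 1))).
Proof.
  split.
  - intros c' [mu [Hmu ->]]. apply (c_low n hn mu Hmu).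
  - intros b Hb. apply Hb. apply (c_in n hn).
Qed.
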